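(* For disjoint $I,J\subset\{1,\dots,n\}$, the function $g(I,J)=\bigl(\Psi^{*(-1)}*D_I\Psi\bigr)(J)$ satisfies \[ g(\emptyset,J)=\delta_{\emptyset,J},\qquad g(I,J)=\Bigl(\prod_{i\in I'}(1+\zeta_{i,\iota(I)})\Bigr)\sum_{K\subset J}\Bigl(\prod_{i\in K}\zeta_{i,\iota(I)}\Bigr)g(I'\cup K,J\setminus K)\quad\text{if }I\neq\emptyset, \] where $I'=I\setminus\{\iota(I)\}$. (This system of equations determines $g$ uniquely by induction on $|I|+|J|$.)
   Context: Fix $n\ge1$, real numbers $b_1,\dots,b_n\ge0$ and complex numbers $\zeta_{ij}=\zeta_{ji}$ such that $\prod_{i,j\in I,i<j}|1+\zeta_{ij}|\le\prod_{i\in I}e^{b_i}$ for every $I\subset\{1,\dots,n\}$. Let $\mathcal{A}$ be the set of complex functions on the power set of $\{1,\dots,n\}$, with product $f*g(I)=\sum_{J\subset I}f(J)g(I\setminus J)$; this is a commutative algebra with unit $1_{\mathcal A}(I)=\delta_{I,\emptyset}$, and any $f$ with $f(\emptyset)\neq0$ has a unique $*$-inverse $f^{*(-1)}$. For $I\subset\{1,\dots,n\}$ define $D_If(J)=f(I\cup J)$ if $I\cap J=\emptyset$ and $D_If(J)=0$ otherwise. Let $\Psi(I)=\prod_{i,j\in I,i<j}(1+\zeta_{ij})$ (so $\Psi(\emptyset)=1$). Let $\iota$ be a function assigning to each nonempty $I\subset\{1,\dots,n\}$ an element $\iota(I)\in I$ such that $\prod_{j\in I\setminus\{\iota(I)\}}|1+\zeta_{j,\iota(I)}|\le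 e^{2b_{\iota(I)}}$ (such an element exists by the hypothesis). Empty sums are $0$, empty products are $1$. *)

(* Defs.v *)
From HB Require Import structures.
From mathcomp Require Import all_boot all_order all_algebra.
Set Implicit Arguments. Unset Strict Implicit. Unset Printing Implicit Defensive.
Import Order.TTheory GRing.Theory Num.Theory.
Local Open Scope ring_scope.

Section SetAlgebra.
Variables (C : numClosedFieldType) (n : nat).
Local Notation S := {set 'I_n}.

Definition sconv (f g : S -> C) : S -> C :=
  fun I => \sum_(J : S | J \subset I) f J * g (I :\: J).

Definition sunit : S -> C := fun I => (I == set0)%:R.

(* *-inverse, computed by the recursion
   f^{-1}(0) = 1/f(0),  f^{-1}(I) = -(1/f(0)) sum_{0 <> J subset I} f(J) f^{-1}(I\J),
   with a fuel argument; the fuel #|I| suffices. *)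
Fixpoint sinv_aux (f : S -> C) (k : nat) (I : S) : C :=
  match k with
  | 0%N => if I == set0 then (f set0)^-1 else 0
  | k'.+1 => if I == set0 then (f set0)^-1 else
      - (f set0)^-1 * \sum_(J : S | (J \subset I) && (J != set0)) f J * sinv_aux f k' (I :\: J)
  end.

Definition sinv (f : S -> C) : S -> C := fun I => sinv_aux f #|I| I.

Definition sD (I : S) (f : S -> C) : S -> C :=
  fun J => if [disjoint I & J] then f (I :|: J) else 0.

Definition Psi (zeta : 'I_n -> 'I_n -> C) : S -> C :=
  fun I => \prod_(i in I) \prod_(j in I | (i < j)%N) (1 + zeta i j).

Definition gfun (zeta : 'I_n -> 'I_n -> C) (I J : S) : C :=
  sconv (sinv (Psi zeta)) (sD I (Psi zeta)) J.

End SetAlgebra.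

(* Main.v *)
Require Import Defs.
From HB Require Import structures.
From mathcomp Require Import all_boot all_order all_algebra.
Set Implicit Arguments. Unset Strict Implicit. Unset Printing Implicit Defensive.
Import Order.TTheory GRing.Theory Num.Theory.
Local Open Scope ring_scope.

Section H1.
Variables (C : numClosedFieldType) (n : nat).
Local Notation S := {set 'I_n}.

Lemma expand_prod (M : S) (z : 'I_n -> C) :
  \prod_(i in M) (1 + z i) = \sum_(K : S | K \subset M) \prod_(i in K) z i.
Proof.
have -> : \prod_(i in M) (1 + z i) =
   \prod_i ((if i \in M then z i else 0) + 1).
  rewrite big_mkcond /=; apply: eq_bigr => i _.
  by case: (i \in M); rewrite ?add0r // addrC.
rewrite bigA_distr /=.
rewrite [RHS]big_mkcond /=; apply: eq_bigr => K _.
case: (boolP (K \subset M)) => KM.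
  rewrite [RHS]big_mkcond /=; apply: eq_bigr => i _.
  case: (boolP (i \in K)) => // iK.
  by rewrite (subsetP KM _ iK).
have [i iK iM] : exists2 i, i \in K & i \notin M.
  by apply/exists_inP; move: KM; rewrite subset_disjoint; apply: contraNT => /exists_inPn H; apply/pred0P => x /=; rewrite inE; case: (boolP (x \in K)) => //= xK; rewrite -(negbK (x \in M)) H.
by rewrite (bigD1 i) //= iK (negbTE iM) mul0r.
Qed.
End H1.
Section H2.
Variables (C : numClosedFieldType) (n : nat).
Local Notation S := {set 'I_n}.
Variable zeta : 'I_n -> 'I_n -> C.
Hypothesis hsym : forall i j, zeta i j = zeta j i.

Lemma Psi_add (A : S) x : x \notin A ->
  Psi zeta (x |: A) = Psi zeta A * \prod_(a in A) (1 + zeta a x).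
Proof.
move=> xA; rewrite /Psi big_setU1 //=.
have row : \prod_(j in x |: A | (x < j)%N) (1 + zeta x j)
         = \prod_(j in A | (x < j)%N) (1 + zeta x j).
  rewrite big_mkcondr [RHS]big_mkcondr /= big_setU1 //= ltnn mul1r //.
rewrite row.
have inner : forall i, i \in A -> \prod_(j in x |: A | (i < j)%N) (1 + zeta i j)
   = (if (i < x)%N then 1 + zeta i x else 1) * \prod_(j in A | (i < j)%N) (1 + zeta i j).
  move=> i iA; rewrite big_mkcondr [X in _ = _ * X]big_mkcondr /= big_setU1 //=.
rewrite (eq_bigr _ inner) big_split /= mulrA [RHS]mulrC; congr (_ * _).
rewrite [RHS](bigID (fun a : 'I_n => (a < x)%N)) /= mulrC; congr (_ * _).
  by rewrite big_mkcondr.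
apply: eq_big => a.
  case: (boolP (a \in A)) => //= aA.
  have xa : (x : nat) != a by apply: contraNneq xA => /val_inj ->.
  by rewrite -leqNgt ltn_neqAle xa.
by move=> _; rewrite hsym.
Qed.
End H2.
Section H3.
Variables (C : numClosedFieldType) (n : nat).
Local Notation S := {set 'I_n}.
Variable f : S -> C.

Lemma card_setD_lt (I J : S) : J \subset I -> J != set0 -> (#|I :\: J| < #|I|)%N.
Proof.
move=> JI J0; rewrite cardsD (setIidPr JI).
have : (0 < #|J|)%N by rewrite card_gt0.
have : (#|J| <= #|I|)%N by apply: subset_leq_card.
move=> a b; rewrite ltn_subrL b /=.
by apply: leq_trans b a.
Qed.

Lemma sinv_auxE k (I : S) : sinv_aux f k.+1 I = if I == set0 then (f set0)^-1 else
      - (f set0)^-1 * \sum_(J : S | (J \subset I) && (J != set0)) f J * sinv_aux f k (I :\: J).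
Proof. by []. Qed.

Lemma sinv_aux_S k (I : S) : (#|I| <= k)%N -> sinv_aux f k.+1 I = sinv_aux f k I.
Proof.
elim: k I => [|k IH] I hI.
  have -> : I = set0 by apply/eqP; rewrite -cards_eq0 -leqn0.
  by rewrite /= eqxx.
rewrite !sinv_auxE; case: (I == set0) => //; congr (_ * _); apply: eq_bigr => J /andP [JI J0].
rewrite IH //; rewrite -ltnS; apply: leq_trans hI; exact: card_setD_lt.
Qed.

Lemma sinv_aux_ge k (I : S) : (#|I| <= k)%N -> sinv_aux f k I = sinv f I.
Proof.
move=> h; rewrite /sinv -(subnK h); elim: (k - #|I|)%N => // m IH.
by rewrite addSn sinv_aux_S ?IH // leq_addl.
Qed.

Lemma sinv0 : sinv f set0 = (f set0)^-1.
Proof. by rewrite /sinv cards0 /= eqxx. Qed.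

Lemma sinv_rec (I : S) : I != set0 ->
  sinv f I = - (f set0)^-1 * \sum_(J : S | (J \subset I) && (J != set0)) f J * sinv f (I :\: J).
Proof.
move=> I0; rewrite /sinv; case E: #|I| => [|k].
  by move/eqP: E; rewrite cards_eq0 (negbTE I0).
rewrite /= (negbTE I0); congr (_ * _); apply: eq_bigr => J /andP [JI J0].
rewrite sinv_aux_ge // -ltnS -E; exact: card_setD_lt.
Qed.

Lemma sinv_right (I : S) : f set0 != 0 ->
  \sum_(J : S | J \subset I) f J * sinv f (I :\: J) = (I == set0)%:R.
Proof.
move=> f0; case: (eqVneq I set0) => [->|I0].
  rewrite (big_pred1 set0); last by move=> J; rewrite subset0.
  by rewrite setD0 sinv0 mulfV.
rewrite (bigD1 set0) ?sub0set //= setD0 sinv_rec //.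
rewrite mulrA mulrN mulfV // mulN1r.
rewrite (eq_bigl (fun J : S => (J \subset I) && (J != set0))) ?addNr //.
Qed.

Lemma sconv_comm (g h : S -> C) I : sconv g h I = sconv h g I.
Proof.
rewrite /sconv (reindex_onto (fun J => I :\: J) (fun J => I :\: J)) /=.
  apply: eq_big => J.
    rewrite subsetDl /= setDDr setDv set0U; apply/eqP/idP => [<-|]; first exact: subsetIl.
    by move/setIidPr.
  move=> /andP [_ /eqP ->]; rewrite mulrC; congr (_ * _).
move=> J JI; rewrite setDDr setDv set0U; exact/setIidPr.
Qed.

Lemma sinv_left (I : S) : f set0 != 0 -> sconv (sinv f) f I = (I == set0)%:R.
Proof. by move=> f0; rewrite sconv_comm; apply: sinv_right. Qed.
End H3.

Section Main.
Variables (C : numClosedFieldType) (n : nat).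
Local Notation S := {set 'I_n}.

Lemma disjP (A B : S) : reflect (forall i, i \in A -> i \in B -> False) [disjoint A & B].
Proof.
rewrite disjoint_subset; apply: (iffP subsetP) => [h i iA iB|h i iA].
  by move: (h i iA); rewrite inE iB.
by rewrite inE; apply/negP => /(h i iA).
Qed.

Lemma exch (J : S) (F : S -> S -> C) :
  \sum_(L : S | L \subset J) \sum_(K : S | K \subset J :\: L) F L K =
  \sum_(K : S | K \subset J) \sum_(L : S | L \subset J :\: K) F L K.
Proof.
rewrite (exchange_big_dep (fun K : S => K \subset J)) /=; last first.
  by move=> L K _; rewrite subsetD => /andP [].
apply: eq_bigr => K KJ; apply: eq_bigl => L.
by rewrite !subsetD KJ /= disjoint_sym.
Qed.
End Main.

Theorem mainTheorem5 (C : numClosedFieldType) (n : nat) (hn : (0 < n)%N)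
  (eb : 'I_n -> C) (* eb i stands for e^{b_i} *)
  (heb : forall i, eb i \is Num.real /\ 1 <= eb i)
  (zeta : 'I_n -> 'I_n -> C)
  (hsym : forall i j, zeta i j = zeta j i)
  (hbound : forall I : {set 'I_n},
     \prod_(i in I) \prod_(j in I | (i < j)%N) `|1 + zeta i j| <= \prod_(i in I) eb i)
  (iota : {set 'I_n} -> 'I_n)
  (hiota : forall I : {set 'I_n}, I != set0 ->
     iota I \in I /\
     \prod_(j in I :\ iota I) `|1 + zeta j (iota I)| <= eb (iota I) ^+ 2) :
  let g := gfun zeta in
  (forall J : {set 'I_n}, g set0 J = (J == set0)%:R) /\
  (forall I J : {set 'I_n}, [disjoint I & J] -> I != set0 ->
     g I J = (\prod_(i in I :\ iota I) (1 + zeta i (iota I))) *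
       \sum_(K : {set 'I_n} | K \subset J)
          (\prod_(i in K) zeta i (iota I)) * g ((I :\ iota I) :|: K) (J :\: K)) /\
  (forall h : {set 'I_n} -> {set 'I_n} -> C,
     (forall J : {set 'I_n}, h set0 J = (J == set0)%:R) ->
     (forall I J : {set 'I_n}, [disjoint I & J] -> I != set0 ->
        h I J = (\prod_(i in I :\ iota I) (1 + zeta i (iota I))) *
          \sum_(K : {set 'I_n} | K \subset J)
             (\prod_(i in K) zeta i (iota I)) * h ((I :\ iota I) :|: K) (J :\: K)) ->
     forall I J : {set 'I_n}, [disjoint I & J] -> h I J = g I J).
Proof.
move=> g.
have Psi0 : Psi zeta set0 = 1 by rewrite /Psi big_set0.
have Psi0n : Psi zeta set0 != 0 by rewrite Psi0 oner_neq0.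
have sD0 : forall J, sD set0 (Psi zeta) J = Psi zeta J.
  move=> J; rewrite /sD (_ : [disjoint set0 & J]) ?set0U //.
  by apply/disjP => i; rewrite inE.
have part1 : forall J : {set 'I_n}, g set0 J = (J == set0)%:R.
  move=> J; rewrite /g /gfun -(sinv_left J Psi0n) /sconv.
  by apply: eq_bigr => K _; rewrite sD0.
have part2 : forall I J : {set 'I_n}, [disjoint I & J] -> I != set0 ->
     g I J = (\prod_(i in I :\ iota I) (1 + zeta i (iota I))) *
       \sum_(K : {set 'I_n} | K \subset J)
          (\prod_(i in K) zeta i (iota I)) * g ((I :\ iota I) :|: K) (J :\: K).
  move=> I J dIJ I0.
  have [xI _] := hiota I I0.
  set x := iota I in xI *; set I' := I :\ x; set c := \prod_(i in I') _.
  have key : forall M : {set 'I_n}, M \subset J -> Psi zeta (I :|: M) =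
      c * \sum_(K : {set 'I_n} | K \subset M) (\prod_(i in K) zeta i x) * Psi zeta (I' :|: M).
    move=> M MJ.
    have dI'M : [disjoint I' & M].
      apply/disjP => i; rewrite !inE => /andP [_ iI] iM.
      by move/disjP: dIJ => /(_ i iI (subsetP MJ _ iM)).
    have xn : x \notin I' :|: M.
      rewrite !inE eqxx /=; apply/negP => xM.
      by move/disjP: dIJ => /(_ x xI (subsetP MJ _ xM)).
    have U : \prod_(a in I' :|: M) (1 + zeta a x) = c * \prod_(a in M) (1 + zeta a x).
      by rewrite (eq_bigl [predU I' & M]) ?bigU // => i; rewrite !inE.
    rewrite -{1}(setD1K xI) -setUA Psi_add // U expand_prod.
    rewrite mulrCA; congr (_ * _); rewrite big_distrr /=.
    by apply: eq_bigr => K _; rewrite mulrC.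
  rewrite /g /gfun /sconv.
  transitivity (c * \sum_(L : {set 'I_n} | L \subset J) \sum_(K : {set 'I_n} | K \subset J :\: L)
       sinv (Psi zeta) L * ((\prod_(i in K) zeta i x) * Psi zeta (I' :|: (J :\: L)))).
    rewrite big_distrr; apply: eq_bigr => L LJ /=.
    rewrite /sD (disjointWr _ dIJ) ?subsetDl // key ?subsetDl //.
    by rewrite mulrCA big_distrr.
  rewrite exch; congr (_ * _); apply: eq_bigr => K KJ.
  rewrite big_distrr; apply: eq_bigr => L LJK /=.
  rewrite mulrCA; congr (_ * (_ * _)).
  move: LJK; rewrite subsetD => /andP [LJ dLK].
  rewrite /sD.
  have -> : [disjoint I' :|: K & J :\: K :\: L].
    apply/disjP => i; rewrite !inE => /orP [/andP [_ iI]|iK] /andP [_ /andP [iK' iJ]].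
      by move/disjP: dIJ => /(_ i iI iJ).
    by rewrite iK in iK'.
  congr (Psi zeta _); apply/setP => i; rewrite !inE.
  case iK: (i \in K).
    have iJ : i \in J by apply: (subsetP KJ).
    have iL : i \in L = false by apply/negP => iL; move/disjP: dLK => /(_ i iL iK).
    by rewrite iJ iL orbT.
  by rewrite orbF.
split => //; split => // h h0 hrec.
suff : forall m (I J : {set 'I_n}), (#|I| + #|J| <= m)%N -> [disjoint I & J] -> h I J = g I J.
  by move=> H I J; apply: (H _ I J (leqnn _)).
elim=> [|m IH] I J.
  rewrite leqn0 addn_eq0 !cards_eq0 => /andP [/eqP -> _] _; by rewrite h0 part1.
move=> hm dIJ; case: (eqVneq I set0) => [->|I0]; first by rewrite h0 part1.
rewrite hrec // part2 //; congr (_ * _); apply: eq_bigr => K KJ.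
have [xI _] := hiota I I0.
have dIK : [disjoint I :\ iota I :|: K & J :\: K].
  apply/disjP => i; rewrite !inE => /orP [/andP [_ iI]|iK] /andP [iK' iJ].
    by move/disjP: dIJ => /(_ i iI iJ).
  by rewrite iK in iK'.
rewrite IH //.
have c1 : (#|I :\ iota I :|: K| <= #|I :\ iota I| + #|K|)%N by rewrite cardsU leq_subr.
have c2 : #|J :\: K| = (#|J| - #|K|)%N by rewrite cardsD (setIidPr KJ).
have c3 : (#|K| <= #|J|)%N by apply: subset_leq_card.
have c4 : #|I| = (#|I :\ iota I|).+1 by rewrite (cardsD1 (iota I)) xI.
rewrite -ltnS; apply: leq_trans hm; rewrite c4 addSn ltnS.
apply: leq_trans (leq_add c1 (leqnn _)) _; rewrite c2 -addnA subnKC //.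
Qed.
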